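(* Let $n\ge2$, $l\ge1$, $s\in\{+1,-1\}$ and $i_2,\dots,i_{2l}\in\{0,1\}$ with $0i_2\cdots i_l=i_{l+1}\cdots i_{2l}$ or $0i_2\cdots i_l=\bar i_{l+1}\cdots\bar i_{2l}$. Let $$|\mathscr{G}\rangle=\tfrac{1}{\sqrt2}\Big(|0\rangle\textstyle\bigotimes_{k=2}^{2l}|i_k\rangle+s\,|1\rangle\bigotimes_{k=2}^{2l}|\bar i_k\rangle\Big)$$ and consider $n$ identical copies $|\mathscr{G}\rangle^{\otimes n}$. Perform a projective measurement in the GHZ basis (Bell basis when $n=2$, $l=1$) on the first $l$ qubits of each copy (ordered by copy), and let $|\mathcal{G}_a\rangle$ be the outcome and $|\mathcal{G}_b\rangle$ the state into which the remaining qubits (the last $l$ qubits of each copy, ordered by copy) collapse. If $s=+1$, then $|\mathcal{G}_a\rangle$ and $|\mathcal{G}_b\rangle$ are the same. If $s=-1$, then they are the same when $n$ is even and different when $n$ is odd.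
   Context: For a bit $b$, $\bar b=1-b$. For $N\ge 2$ qubits, the GHZ basis is the orthonormal basis $\frac{1}{\sqrt2}\big(|0\,b_2\cdots b_N\rangle\pm|1\,\bar b_2\cdots\bar b_N\rangle\big)$, $b_k\in\{0,1\}$; for $N=2$ it is the Bell basis. ''Same'' means equal as quantum states (up to a global phase). *)

(* Defs.v *)
From HB Require Import structures.
From mathcomp Require Import all_boot all_order all_algebra.
From mathcomp Require Import algC.
Set Implicit Arguments. Unset Strict Implicit. Unset Printing Implicit Defensive.
Import Order.TTheory GRing.Theory Num.Theory.
Local Open Scope ring_scope.

Notation bits N := {ffun 'I_N -> bool}.
(* (Unnormalized) state vectors of N qubits: amplitudes in C^(2^N). *)
Notation qstate N := {ffun bits N -> algC}.

Definition ket N (b : bits N) : qstate N := [ffun x => (x == b)%:R].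
Definition bcompl N (b : bits N) : bits N := [ffun q => ~~ b q].

Definition ghz N (z : bits N) (c : algC) : qstate N :=
  [ffun x => (sqrtC 2)^-1 * (ket z x + c * ket (bcompl z) x)].

(* The GHZ basis: (|0 b2..bN> +- |1 b2bar..bNbar>)/sqrt 2 ; first qubit = index 0 *)
Definition is_ghz_basis_state N (phi : qstate N) : Prop :=
  exists (z : bits N) (c : algC),
    (c = 1 \/ c = -1) /\ (forall q : 'I_N, val q = 0%N -> z q = false) /\
    phi = ghz z c.

(* Block indexing: qubit j of copy k in n copies of m-qubit blocks is k*m+j. *)
Lemma blk_proof n m (k : 'I_n) (j : 'I_m) : (k * m + j < n * m)%N.
Proof.
case: k j => k hk [j hj] /=.
apply: (@leq_trans (k.+1 * m)); first by rewrite mulSn addnC ltn_add2r.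
by rewrite leq_mul2r hk orbT.
Qed.
Definition blk n m (k : 'I_n) (j : 'I_m) : 'I_(n * m) := Ordinal (blk_proof k j).

Lemma unblk_m_pos n m (q : 'I_(n * m)) : (0 < m)%N.
Proof. case: q => q hq; case: m hq => [|m] //; by rewrite muln0. Qed.
Lemma unblk1_proof n m (q : 'I_(n * m)) : (q %/ m < n)%N.
Proof. by rewrite ltn_divLR ?(unblk_m_pos q). Qed.
Lemma unblk2_proof n m (q : 'I_(n * m)) : (q %% m < m)%N.
Proof. by rewrite ltn_pmod ?(unblk_m_pos q). Qed.
Definition unblk1 n m (q : 'I_(n * m)) : 'I_n := Ordinal (unblk1_proof q).
Definition unblk2 n m (q : 'I_(n * m)) : 'I_m := Ordinal (unblk2_proof q).

Definition tpow n M (u : qstate M) : qstate (n * M) :=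
  [ffun x : bits (n * M) => \prod_(k < n) u [ffun j : 'I_M => x (blk k j)]].

(* Reassemble a configuration of the n copies of 2l qubits from the
   configuration a of the first l qubits of each copy (ordered by copy) and
   the configuration b of the last l qubits of each copy (ordered by copy). *)
Definition merge n l (a b : bits (n * l)) : bits (n * (l + l)) :=
  [ffun q : 'I_(n * (l + l)) => match split (unblk2 q) with
             | inl j1 => a (blk (unblk1 q) j1)
             | inr j2 => b (blk (unblk1 q) j2)
             end].

(* Unnormalized collapsed state of register B when register A is found in
   phi:  (<phi| (x) I) |Psi>. *)
Definition collapse n l (Psi : qstate (n * (l + l))) (phi : qstate (n * l))
  : qstate (n * l) :=
  [ffun b : bits (n * l) => \sum_(a : bits (n * l)) (phi a)^* * Psi (merge a b)].

Definition qnormalize N (v : qstate N) : qstate N :=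
  [ffun x => (sqrtC (\sum_y `|v y| ^+ 2))^-1 * v x].

(* equal as quantum states, up to a global phase *)
Definition same_state N (u v : qstate N) : Prop :=
  exists c : algC, `|c| = 1 /\ forall x, u x = c * v x.

(* Main.v *)
Require Import Defs.
From HB Require Import structures.
From mathcomp Require Import all_boot all_order all_algebra.
From mathcomp Require Import algC.
From mathcomp Require Import ring.
Set Implicit Arguments. Unset Strict Implicit. Unset Printing Implicit Defensive.
Import Order.TTheory GRing.Theory Num.Theory.
Local Open Scope ring_scope.

Lemma unblk1_blk n m (k : 'I_n) (j : 'I_m) : unblk1 (blk k j) = k.
Proof.
apply: val_inj => /=; have m0 : (0 < m)%N by case: j => j /=; case: m.
by rewrite divnMDl // divn_small ?addn0.
Qed.
Lemma unblk2_blk n m (k : 'I_n) (j : 'I_m) : unblk2 (blk k j) = j.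
Proof. by apply: val_inj => /=; rewrite modnMDl modn_small. Qed.
Lemma blk_unblk n m (q : 'I_(n * m)) : blk (unblk1 q) (unblk2 q) = q.
Proof. by apply: val_inj => /=; rewrite -divn_eq. Qed.

Definition blockk n m (k : 'I_n) (x : bits (n * m)) : bits m := [ffun j => x (blk k j)].

Lemma bits_ext n m (x y : bits (n * m)) : (forall k, blockk k x = blockk k y) -> x = y.
Proof.
move=> H; apply/ffunP => q; rewrite -(blk_unblk q).
by have /ffunP/(_ (unblk2 q)) := H (unblk1 q); rewrite !ffunE.
Qed.

Definition lhalf l (y : bits (l + l)) : bits l := [ffun j => y (lshift l j)].
Definition rhalf l (y : bits (l + l)) : bits l := [ffun j => y (rshift l j)].

Lemma halves_eq l (x y : bits (l + l)) : (x == y) = (lhalf x == lhalf y) && (rhalf x == rhalf y).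
Proof.
apply/eqP/andP => [->//|[/eqP/ffunP L /eqP/ffunP R]]; apply/ffunP => q.
rewrite -(splitK q); case: (split q) => j /=. by have := L j; rewrite !ffunE. by have := R j; rewrite !ffunE.
Qed.

Lemma lhalf_merge n l (a b : bits (n * l)) (k : 'I_n) :
  lhalf (blockk k (Defs.merge a b)) = blockk k a.
Proof.
apply/ffunP => j; rewrite !ffunE unblk1_blk unblk2_blk.
case: splitP => j' /= E; first by rewrite (val_inj E).
by have := ltn_ord j; rewrite E ltnNge leq_addr.
Qed.
Lemma rhalf_merge n l (a b : bits (n * l)) (k : 'I_n) :
  rhalf (blockk k (Defs.merge a b)) = blockk k b.
Proof.
apply/ffunP => j; rewrite !ffunE unblk1_blk unblk2_blk.
case: splitP => j' /= E.
  by have := ltn_ord j'; rewrite -E ltnNge leq_addr.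
by move/eqP: E; rewrite eqn_add2l => /eqP E; rewrite (val_inj E).
Qed.

Definition r : algC := (sqrtC 2)^-1.
Definition fx m (h : bits m) (c : bool) : bits m := [ffun j => h j (+) c].
Definition sg (s : algC) (t : bool) : algC := if t then s else 1.

Lemma ghz_val N (z : bits N) c x :
  ghz z c x = r * ((x == z)%:R + c * (x == bcompl z)%:R).
Proof. by rewrite !ffunE. Qed.

Lemma lhalf_bcompl l (i : bits (l + l)) : lhalf (bcompl i) = fx (lhalf i) true.
Proof. by apply/ffunP => j; rewrite !ffunE addbT. Qed.
Lemma rhalf_bcompl l (i : bits (l + l)) : rhalf (bcompl i) = fx (rhalf i) true.
Proof. by apply/ffunP => j; rewrite !ffunE addbT. Qed.
Lemma fx0 m (h : bits m) : fx h false = h.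
Proof. by apply/ffunP => j; rewrite !ffunE addbF. Qed.
Lemma fxK m (h : bits m) t u : fx (fx h t) u = fx h (t (+) u).
Proof. by apply/ffunP => j; rewrite !ffunE addbA. Qed.

Lemma factor_good l (i : bits (l + l)) s (y : bits (l + l)) t :
  lhalf i != fx (lhalf i) true ->
  lhalf y = fx (lhalf i) t ->
  ghz i s y = (rhalf y == fx (rhalf i) t)%:R * (r * sg s t).
Proof.
move=> nf hy; rewrite ghz_val !halves_eq lhalf_bcompl rhalf_bcompl hy.
case: t hy => hy /=.
  rewrite eq_sym (negbTE nf) eqxx /= /sg.
  by move: (_ == _)%:R => e; ring.
by rewrite !fx0 eqxx (negbTE nf) /= /sg; move: (_ == _)%:R => e; ring.
Qed.

Lemma factor_bad l (i : bits (l + l)) s (y : bits (l + l)) :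
  lhalf y != lhalf i -> lhalf y != fx (lhalf i) true -> ghz i s y = 0.
Proof.
move=> h1 h2; rewrite ghz_val !halves_eq lhalf_bcompl (negbTE h1) (negbTE h2) /=.
by rewrite mulr0 addr0 mulr0.
Qed.

Definition wt n l (g : bits l) (t : 'I_n -> bool) : bits (n * l) :=
  [ffun q => g (unblk2 q) (+) t (unblk1 q)].
Lemma blockk_wt n l (g : bits l) t (k : 'I_n) : blockk k (wt g t) = fx g (t k).
Proof. by apply/ffunP => j; rewrite !ffunE unblk1_blk unblk2_blk. Qed.

Lemma tpow_good n l (i : bits (l + l)) s (z0 b : bits (n * l)) (t : 'I_n -> bool) :
  lhalf i != fx (lhalf i) true ->
  (forall k, blockk k z0 = fx (lhalf i) (t k)) ->
  tpow n (ghz i s) (Defs.merge z0 b) =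
  (b == wt (rhalf i) t)%:R * \prod_(k < n) (r * sg s (t k)).
Proof.
move=> nf hz; rewrite ffunE.
change (\prod_(k < n) ghz i s (blockk k (Defs.merge z0 b)) =
  (b == wt (rhalf i) t)%:R * \prod_(k < n) (r * sg s (t k))).
rewrite (eq_bigr (fun k => (blockk k b == fx (rhalf i) (t k))%:R * (r * sg s (t k)))); last first.
  by move=> k _; rewrite (factor_good (t := t k) _ nf) ?lhalf_merge ?rhalf_merge.
rewrite big_split /=; congr (_ * _).
have [->|nb] := eqVneq b (wt (rhalf i) t).
  by rewrite big1 // => k _; rewrite blockk_wt eqxx.
case: (boolP [forall k, blockk k b == fx (rhalf i) (t k)]) => [/forallP H|].
  case/eqP: nb; apply: bits_ext => k; rewrite blockk_wt; exact/eqP.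
rewrite negb_forall => /existsP [k /negbTE hk].
by rewrite (bigD1 k) //= hk mul0r.
Qed.

Lemma tpow_bad n l (i : bits (l + l)) s (z0 b : bits (n * l)) (k : 'I_n) :
  blockk k z0 != lhalf i -> blockk k z0 != fx (lhalf i) true ->
  tpow n (ghz i s) (Defs.merge z0 b) = 0.
Proof.
move=> h1 h2; rewrite ffunE (bigD1 k) //=.
change (ghz i s (blockk k (Defs.merge z0 b)) *
  \prod_(j < n | j != k) ghz i s [ffun j0 => Defs.merge z0 b (blk j j0)] = 0).
by rewrite factor_bad ?mul0r ?lhalf_merge.
Qed.

Lemma r_ge0 : 0 <= r.
Proof. by rewrite /r invr_ge0 sqrtC_ge0 ler0n. Qed.

Lemma sum_ket N (z : bits N) (G : bits N -> algC) :
  \sum_a (a == z)%:R * G a = G z.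
Proof.
rewrite (bigD1 z) //= eqxx mul1r big1 ?addr0 // => a /negbTE ->; exact: mul0r.
Qed.

Lemma collapse_ghz n l (Psi : qstate (n * (l + l))) (z : bits (n * l)) c
  (hc : c = 1 \/ c = -1) b :
  collapse Psi (ghz z c) b =
  r * (Psi (Defs.merge z b) + c * Psi (Defs.merge (bcompl z) b)).
Proof.
rewrite ffunE.
have creal : c \is Num.real by case: hc => ->; rewrite ?rpredN rpred1.
rewrite (eq_bigr (fun a => (a == z)%:R * (r * Psi (Defs.merge a b)) +
   (a == bcompl z)%:R * (r * c * Psi (Defs.merge a b)))); last first.
  move=> a _; rewrite conj_Creal; last first.
    rewrite ghz_val; apply: rpredM; first exact: ger0_real r_ge0.
    by apply: rpredD; rewrite ?rpredM ?realn.
  rewrite ghz_val; move: (a == z)%:R (a == bcompl z)%:R => e1 e2; ring.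
rewrite big_split /= !sum_ket; ring.
Qed.

Lemma r_neq0 : r != 0.
Proof. by rewrite /r invr_eq0 sqrtC_eq0 pnatr_eq0. Qed.

Lemma ghz_at_z N (z : bits N) c : z != bcompl z -> ghz z c z = r.
Proof. by move=> hz; rewrite ghz_val eqxx (negbTE hz) mulr0 addr0 mulr1. Qed.
Lemma ghz_at_bz N (z : bits N) c : z != bcompl z -> ghz z c (bcompl z) = r * c.
Proof. by move=> hz; rewrite ghz_val eqxx eq_sym (negbTE hz) add0r mulr1. Qed.

Lemma ghz_norm N (z : bits N) c : z != bcompl z -> `|c| = 1 ->
  \sum_y `|ghz z c y| ^+ 2 = 1.
Proof.
move=> hz hc; rewrite (bigD1 z) // (bigD1 (bcompl z)) /=; last by rewrite eq_sym.
rewrite big1 ?addr0; last first.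
  move=> y /andP [h1 h2]; rewrite ghz_val (negbTE h1) (negbTE h2) mulr0 addr0 mulr0.
  by rewrite normr0 expr0n.
rewrite ghz_at_z // ghz_at_bz // normrM hc mulr1 ger0_norm ?r_ge0 //.
by rewrite /r exprVn sqrtCK; field.
Qed.

Lemma normalize_lemma N (v psi : qstate N) k : k != 0 ->
  (forall x, v x = k * psi x) -> \sum_y `|psi y| ^+ 2 = 1 ->
  forall x, qnormalize v x = (k / `|k|) * psi x.
Proof.
move=> k0 hv hn x; rewrite ffunE.
have -> : \sum_y `|v y| ^+ 2 = `|k| ^+ 2.
  rewrite (eq_bigr (fun y => `|k| ^+ 2 * `|psi y| ^+ 2)); last first.
    by move=> y _; rewrite hv normrM exprMn.
  by rewrite -mulr_sumr hn mulr1.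
rewrite sqrCK ?normr_ge0 // hv; ring.
Qed.

Lemma unit_phase (k : algC) : k != 0 -> `|k / `|k| | = 1.
Proof.
move=> k0; rewrite normrM normfV normr_id divff //; by rewrite normr_eq0.
Qed.

Lemma not_same N (z : bits N) c e : z != bcompl z -> c != 0 -> e != 0 ->
  ~ (exists d : algC, `|d| = 1 /\ forall x, e * ghz z (- c) x = d * ghz z c x).
Proof.
move=> hz c0 e0 [d [_ H]].
have := H z; rewrite !ghz_at_z // => /(mulIf r_neq0) ed.
have := H (bcompl z); rewrite !ghz_at_bz // ed => /eqP.
rewrite -subr_eq0 => /eqP E.
have : - (d * r * c *+ 2) = 0.
  by rewrite -E; ring.
move/eqP; rewrite oppr_eq0 mulrn_eq0 /= !mulf_eq0 (negbTE r_neq0) (negbTE c0) orbF.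
by rewrite orbF => /eqP d0; move: e0; rewrite ed d0 eqxx.
Qed.

Lemma blockk_bcompl n l (z : bits (n * l)) (k : 'I_n) :
  blockk k (bcompl z) = fx (blockk k z) true.
Proof. by apply/ffunP => j; rewrite !ffunE addbT. Qed.
Lemma bcomplK N (z : bits N) : bcompl (bcompl z) = z.
Proof. by apply/ffunP => j; rewrite !ffunE negbK. Qed.

Lemma ghz_bcompl N (z : bits N) c b : (c = 1 \/ c = -1) ->
  ghz (bcompl z) c b = c * ghz z c b.
Proof.
case=> ->; rewrite !ghz_val bcomplK; move: (_ == z)%:R (_ == bcompl z)%:R => e1 e2; ring.
Qed.

Lemma main_exists n l (hn : (2 <= n)%N) (hl : (1 <= l)%N)
  (s : algC) (hs : s = 1 \/ s = -1) (i : bits (l + l))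
  (hi0 : forall q : 'I_(l + l), val q = 0%N -> i q = false)
  (hi : (forall j : 'I_l, i (rshift l j) = i (lshift l j)) \/
        (forall j : 'I_l, i (rshift l j) = ~~ i (lshift l j)))
  (z : bits (n * l)) c (hc : c = 1 \/ c = -1)
  (hprob : collapse (tpow n (ghz i s)) (ghz z c) != 0) :
  exists k, k != 0 /\
   ((forall b, collapse (tpow n (ghz i s)) (ghz z c) b = k * ghz z (c * s ^+ n) b) \/
    (forall b, collapse (tpow n (ghz i s)) (ghz z c) b = k * ghz (bcompl z) (c * s ^+ n) b)).
Proof.
set f := lhalf i; set g := rhalf i.
pose j0 : 'I_l := Ordinal hl.
have nf : f != fx f true.
  by apply/eqP => /ffunP /(_ j0); rewrite !ffunE hi0.
case: (boolP [forall k, (blockk k z == f) || (blockk k z == fx f true)]); last first.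
  rewrite negb_forall => /existsP [k]; rewrite negb_or => /andP [h1 h2]; rewrite /f in h1 h2.
  case/eqP: hprob; apply/ffunP => b; rewrite collapse_ghz // (tpow_bad _ _ h1 h2).
  rewrite (@tpow_bad _ _ _ s (bcompl z) b k) ?ffunE ?mulr0 ?addr0 ?mulr0 //; rewrite blockk_bcompl.
    apply/eqP => E; move/eqP: h2; apply; by rewrite -E fxK /= fx0.
  apply/eqP => E; move/eqP: h1; apply.
  by have := congr1 (fun h => fx h true) E; rewrite /= !fxK /= !fx0.
move=> /forallP G.
pose t k := blockk k z != f.
have ht : forall k, blockk k z = fx f (t k).
  move=> k; rewrite /t; case: eqP => [->|NE]; first by rewrite fx0.
  by have := G k; case: eqP => //= _ /eqP.
have ht' : forall k, blockk k (bcompl z) = fx f (~~ t k).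
  by move=> k; rewrite blockk_bcompl ht fxK addbT.
pose A := \prod_(k < n) (r * sg s (t k)).
have A0 : A != 0.
  apply/prodf_neq0 => k _.
  rewrite mulf_neq0 ?r_neq0 // /sg; case: (t k); last exact: oner_neq0.
  by case: hs => ->; rewrite ?oppr_eq0 oner_neq0.
have hw : wt g (fun k => ~~ t k) = bcompl (wt g t).
  by apply/ffunP => q; rewrite !ffunE addbN.
have hB : \prod_(k < n) (r * sg s (~~ t k)) = s ^+ n * A.
  rewrite (eq_bigr (fun k => s * (r * sg s (t k)))); last first.
    by move=> k _; rewrite /sg; case: (t k); case: hs => -> /=; ring.
  by rewrite big_split /= prodr_const card_ord.
have hcol : forall b, collapse (tpow n (ghz i s)) (ghz z c) b = A * ghz (wt g t) (c * s ^+ n) b.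
  move=> b; rewrite collapse_ghz // (tpow_good _ _ nf ht) (tpow_good _ _ nf ht') hw hB.
  rewrite ghz_val; move: (_ == wt g t)%:R (_ == bcompl (wt g t))%:R => e1 e2.
  rewrite /A; move: (\prod_(_ < n) _) => P; ring.
exists A; split => //.
case: hi => H; [left|right] => b; rewrite hcol; congr (_ * ghz _ _ _);
  apply: bits_ext => k; rewrite blockk_wt ?blockk_bcompl ht ?fxK.
  by congr fx; apply/ffunP => j; rewrite !ffunE H.
have -> : g = fx f true by apply/ffunP => j; rewrite !ffunE H addbT.
by rewrite fxK addbC.
Qed.

Unset Implicit Arguments.
Theorem corollary2 (n l : nat) (hn : (2 <= n)%N) (hl : (1 <= l)%N)
  (s : algC) (hs : s = 1 \/ s = -1) (i : bits (l + l))
  (hi0 : forall q : 'I_(l + l), val q = 0%N -> i q = false)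
  (hi : (forall j : 'I_l, i (rshift l j) = i (lshift l j)) \/
        (forall j : 'I_l, i (rshift l j) = ~~ i (lshift l j)))
  (phi : qstate (n * l)) (hphi : is_ghz_basis_state phi)
  (hprob : collapse (tpow n (ghz i s)) phi != 0) :
  (s = 1 -> same_state (qnormalize (collapse (tpow n (ghz i s)) phi)) phi) /\
  (s = -1 ->
     (~~ odd n -> same_state (qnormalize (collapse (tpow n (ghz i s)) phi)) phi) /\
     (odd n -> ~ same_state (qnormalize (collapse (tpow n (ghz i s)) phi)) phi)).
Proof.
move: hphi hprob => [z [c [hc [hz0 ->]]]] hprob.
have [k [k0 H]] := main_exists hn hl hs hi0 hi hc hprob.
pose j0 : 'I_l := Ordinal hl.
pose k1 : 'I_n := Ordinal (leq_trans (isT : (0 < 2)%N) hn).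
have hzz : z != bcompl z.
  by apply/eqP => /ffunP /(_ (blk k1 j0)); rewrite ffunE; case: (z _).
have key : forall c', c * s ^+ n = c' -> (c' = 1 \/ c' = -1) ->
   exists k', k' != 0 /\ forall b,
     collapse (tpow n (ghz i s)) (ghz z c) b = k' * ghz z c' b.
  move=> c' <- hc'; case: H => H.
    by exists k; split => // b; rewrite H.
  exists (k * (c * s ^+ n)); split.
    by rewrite mulf_neq0 //; case: hc' => ->; rewrite ?oppr_eq0 oner_neq0.
  by move=> b; rewrite H (@ghz_bcompl _ z _ b hc') !mulrA.
have nc : forall c' : algC, (c' = 1 \/ c' = -1) -> `|c'| = 1.
  by move=> c' [] ->; rewrite ?normrN normr1.
have fin : forall k', k' != 0 ->
    (forall b, collapse (tpow n (ghz i s)) (ghz z c) b = k' * ghz z c b) ->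
    same_state (qnormalize (collapse (tpow n (ghz i s)) (ghz z c))) (ghz z c).
  move=> k' k'0 H'; exists (k' / `|k'|); split; first exact: unit_phase.
  by move=> x; exact: (normalize_lemma k'0 H' (ghz_norm hzz (nc _ hc))).
split.
  move=> s1; have E1 : c * s ^+ n = c by rewrite s1 expr1n mulr1.
  have [k' [k'0 H']] := key c E1 hc.
  exact: fin H'.
move=> sm1; split.
  move=> ev; have E1 : c * s ^+ n = c by rewrite sm1 -signr_odd (negbTE ev) expr0 mulr1.
  have [k' [k'0 H']] := key c E1 hc.
  exact: fin H'.
move=> od.
have hc' : - c = 1 \/ - c = -1 by case: hc => ->; [right|left]; rewrite ?opprK.
have E1 : c * s ^+ n = - c by rewrite sm1 -signr_odd od expr1 mulrN1.
have [k' [k'0 H']] := key (- c) E1 hc'.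
have c0 : c != 0 by case: hc => ->; rewrite ?oppr_eq0 oner_neq0.
have e0 : k' / `|k'| != 0.
  by rewrite mulf_neq0 // invr_eq0 normr_eq0.
move=> [d [hd Hd]]; apply: (not_same hzz c0 e0); exists d; split => // x.
by rewrite -(normalize_lemma k'0 H' (ghz_norm hzz (nc _ hc'))) Hd.
Qed.
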